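(* Let $\theta>0$ and $\gamma:=\frac{\sqrt{2\theta}(1+i)}{2}$. If $S=\sum_{p=0}^\infty a_{p,p}\gamma^{-2p}x^py^p\in A^\infty(\mathbb{R}^2_\theta)$ satisfies $S^2=S=S^*$, then $S=0$ or $S=1$.
   Context: $A^\infty(\mathbb{R}^2_\theta)$ is the algebra of formal series $\sum_{p,q\geq 0}c_{p,q}x^py^q$ with complex coefficients of Schwartz class on $\mathbb{N}^2$ (for every $r\geq1$, $\sup_{p,q}(1+p^2+q^2)^r|c_{p,q}|<\infty$), where $x,y$ are self-adjoint with $yx=xy+i\theta$ (i.e. $[x,y]=-i\theta$); products are computed by reordering into the normal form $x^py^q$ via this relation, and $(c\,x^py^q)^*=\bar c\,y^qx^p$. *)

(* Defs.v *)
From HB Require Import structures.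
From mathcomp Require Import all_boot all_order all_algebra.
From mathcomp Require Import reals.
From mathcomp.real_closed Require Import complex.
Set Implicit Arguments. Unset Strict Implicit. Unset Printing Implicit Defensive.
Import Order.TTheory GRing.Theory Num.Theory.
Local Open Scope ring_scope.
Local Open Scope complex_scope.

(* A formal series  sum_{p,q>=0} c p q x^p y^q  is represented by its
   coefficient function c : nat -> nat -> R[i]. *)
Definition fseries (R : realType) := nat -> nat -> R[i].

Definition schwartz (R : realType) (c : fseries R) : Prop :=
  forall r : nat, (1 <= r)%N ->
    exists M : R, forall p q : nat,
      ((1 + p ^ 2 + q ^ 2) ^ r)%:R * Normc.normc (c p q) <= M.

Definition in_Ainf (R : realType) (c : fseries R) : Prop := schwartz c.

Definition series_to (R : realType) (u : nat -> R[i]) (l : R[i]) : Prop :=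
  forall e : R, 0 < e -> exists N : nat, forall n : nat, (N <= n)%N ->
    Normc.normc (\sum_(k < n) u k - l) < e.

(* i*theta, the commutator constant: y x = x y + i theta *)
Definition itheta (R : realType) (theta : R) : R[i] := theta%:C * 'i.

(* Normal ordering:  y^q x^r = sum_k k! C(q,k) C(r,k) (i theta)^k x^(r-k) y^(q-k).
   Coefficient of x^m y^n in (sum A_{p,q} x^p y^q)(sum B_{r,s} x^r y^s):
   parametrised by p <= m, s <= n, k >= 0 with q = n-s+k, r = m-p+k;
   this is a series in k with finite inner sums. *)
Definition mul_term (R : realType) (theta : R) (A B : fseries R) (m n k : nat) : R[i] :=
  \sum_(p < m.+1) \sum_(s < n.+1)
    A p (n - s + k)%N * B (m - p + k)%N s
    * (k`! * 'C(n - s + k, k) * 'C(m - p + k, k))%:R * itheta theta ^+ k.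

Definition is_mul (R : realType) (theta : R) (A B P : fseries R) : Prop :=
  forall m n : nat, series_to (mul_term theta A B m n) (P m n).

(* (c x^p y^q)^* = conj c y^q x^p, reordered into normal form:
   coefficient of x^m y^n in A^* *)
Definition star_term (R : realType) (theta : R) (A : fseries R) (m n k : nat) : R[i] :=
  conjc (A (m + k)%N (n + k)%N) * (k`! * 'C(n + k, k) * 'C(m + k, k))%:R
    * itheta theta ^+ k.

Definition is_star (R : realType) (theta : R) (A D : fseries R) : Prop :=
  forall m n : nat, series_to (star_term theta A m n) (D m n).

Definition fs0 (R : realType) : fseries R := fun _ _ => 0.
Definition fs1 (R : realType) : fseries R :=
  fun p q => if (p == 0%N) && (q == 0%N) then 1 else 0.

Definition gamma (R : realType) (theta : R) : R[i] :=
  (Num.sqrt (2 * theta))%:C * (1 + 'i) / 2.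

Definition diagS (R : realType) (theta : R) (a : nat -> R[i]) : fseries R :=
  fun p q => if p == q then a p * (gamma theta ^+ (2 * p))^-1 else 0.

(* Main.v *)
Require Import Defs.
From HB Require Import structures.
From mathcomp Require Import all_boot all_order all_algebra.
From mathcomp Require Import reals.
From mathcomp.real_closed Require Import complex.
Import Order.TTheory GRing.Theory Num.Theory.
Local Open Scope ring_scope.
From mathcomp Require Import zify ring lra.

Set Implicit Arguments. Unset Strict Implicit.

Section Comb.
Variable C : numFieldType.

Definition FF (m : nat) (x : C) : C := \prod_(i < m) (x - i%:R).

Lemma FF0 x : FF 0 x = 1. Proof. by rewrite /FF big_ord0. Qed.
Lemma FFS m x : FF m.+1 x = FF m x * (x - m%:R).
Proof. by rewrite /FF big_ord_recr. Qed.

Lemma FF_big m j : (j < m)%N -> FF m j%:R = 0.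
Proof.
move=> hj; rewrite /FF (bigD1 (Ordinal hj)) //= subrr mul0r //.
Qed.

Lemma FF_nat n i : FF i n%:R = ('C(n, i) * i`!)%:R.
Proof.
elim: i => [|i IH]; first by rewrite FF0 bin0 fact0.
rewrite FFS IH.
case: (leqP i n) => hin.
  rewrite -natrB // -natrM; congr (_%:R).
  rewrite factS mulnA [('C(n,i.+1) * i.+1)%N]mulnC mul_bin_left; ring.
by rewrite bin_small // mul0n mul0r bin_small // ?mul0n //; lia.
Qed.

Lemma widen_sum (f : nat -> C) n m : (n <= m)%N ->
  (forall i, (n <= i)%N -> (i < m)%N -> f i = 0) ->
  \sum_(i < n) f i = \sum_(i < m) f i.
Proof.
move=> hnm hz; rewrite (big_ord_widen _ _ hnm) [RHS](bigID (fun i : 'I_m => (i < n)%N)) /=.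
rewrite [X in _ = _ + X]big1 ?addr0 // => i; rewrite -leqNgt => hi.
exact: hz.
Qed.

Lemma FF_mul p q x : FF p x * FF q x =
  \sum_(k < p.+1) (k`! * 'C(p, k) * 'C(q, k))%:R * FF (p + q - k) x.
Proof.
elim: q => [|q IH].
  rewrite FF0 mulr1 big_ord_recl /= big1 ?addr0.
    by rewrite fact0 bin0 bin0 subn0 addn0 mul1r.
  by move=> i _; rewrite bin0n /= muln0 mul0r.
rewrite FFS mulrA IH mulr_suml.
have step : forall k : 'I_p.+1,
  (k`! * 'C(p, k) * 'C(q, k))%:R * FF (p + q - k) x * (x - q%:R) =
  (k`! * 'C(p, k) * 'C(q, k))%:R * FF (p + q.+1 - k) x +
  (k`! * 'C(p, k) * 'C(q, k) * (p - k))%:R * FF (p + q - k) x.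
  move=> [k hk] /=.
  have -> : (p + q.+1 - k = (p + q - k).+1)%N by lia.
  rewrite FFS natrM.
  have -> : x - q%:R = (x - (p + q - k)%:R) + (p - k)%:R.
    have -> : (p + q - k)%:R = q%:R + (p - k)%:R :> C.
      by rewrite -natrD; congr (_%:R); lia.
    ring.
  rewrite mulrDr; ring.
under eq_bigr do rewrite step.
rewrite big_split /=.
have -> : \sum_(k < p.+1) (k`! * 'C(p, k) * 'C(q.+1, k))%:R * FF (p + q.+1 - k) x =
  \sum_(k < p.+1) (k`! * 'C(p, k) * 'C(q, k))%:R * FF (p + q.+1 - k) x +
  \sum_(k < p.+1) ((k.+1)`! * 'C(p, k.+1) * 'C(q, k))%:R * FF (p + q.+1 - k.+1) x.
  rewrite [LHS]big_ord_recl [X in _ = X + _]big_ord_recl.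
  rewrite [X in _ = _ + X]big_ord_recr /= (bin_small (ltnSn p)) muln0 mul0n mul0r addr0.
  rewrite !bin0 -addrA; congr (_ + _).
  rewrite -big_split /=; apply: eq_bigr => i _.
  rewrite binS /bump /=. rewrite !natrM !natrD; ring.
congr (_ + _).
rewrite [RHS]big_ord_recr /= (bin_small (ltnSn p)) muln0 mul0n mul0r addr0.
rewrite [LHS]big_ord_recr /= subnn muln0 mul0r addr0.
apply: eq_bigr => i _.
have -> : (p + q.+1 - i.+1 = p + q - i)%N by lia.
congr (_%:R * _).
have h := mul_bin_left p i.
have -> : ((i.+1)`! * 'C(p, i.+1) * 'C(q, i) = (i.+1 * 'C(p, i.+1)) * i`! * 'C(q,i))%N.
  by rewrite factS; ring.
rewrite h; ring.
Qed.

End Comb.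

Section Lam.
Variable C : numFieldType.
Variable a : nat -> C.

Definition Bc (p q k : nat) : C := (k`! * 'C(p, k) * 'C(q, k))%:R.
Definition T (n k p s : nat) : C := if (p + s == n + k)%N then a p * a s * Bc p s k else 0.

Lemma Tz n k p s : ~~ [&& (k <= p)%N, (k <= s)%N & (p + s == n + k)%N] -> T n k p s = 0.
Proof.
rewrite /T /Bc; case: eqP => // h.
case: (leqP k p) => hp; case: (leqP k s) => hs //= _.
- by rewrite (bin_small hs) !(muln0, mul0n, mulr0n, mulr0, mul0r) .
- by rewrite (bin_small hp) !(muln0, mul0n, mulr0n, mulr0, mul0r) .
- by rewrite (bin_small hp) !(muln0, mul0n, mulr0n, mulr0, mul0r) .
Qed.

Lemma inner_n M j k p s : (j < M)%N ->
  \sum_(n < M) T n k p s * FF n (j%:R : C) = a p * a s * Bc p s k * FF (p + s - k) (j%:R : C).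
Proof.
move=> hjM.
case: (leqP k p) => hkp; last first.
  rewrite /Bc (bin_small hkp) muln0 mul0n mulr0n mulr0 mul0r.
  by apply: big1 => n _; rewrite Tz ?mul0r //; apply/negP => /and3P[h1 _ _]; lia.
case: (ltnP (p + s - k) M) => hM.
  rewrite (bigD1 (Ordinal hM)) //= /T.
  have -> : (p + s == p + s - k + k)%N by apply/eqP; lia.
  rewrite big1 ?addr0 // => n hn; case: eqP => h; last by rewrite mul0r.
  exfalso; move/eqP: hn; apply; apply: val_inj => /=; lia.
rewrite big1; first by rewrite FF_big ?mulr0 //; lia.
move=> n _; rewrite /T; case: eqP => h; last by rewrite mul0r.
have := ltn_ord n; lia.
Qed.

Lemma lambda_idem :
 (forall n, a n = \sum_(k < n.+1) \sum_(p < n.+1) \sum_(s < n.+1) T n k p s) ->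
 forall j, (\sum_(p < j.+1) a p * FF p (j%:R : C)) ^+ 2 = \sum_(p < j.+1) a p * FF p (j%:R : C).
Proof.
move=> E j; set x := (j%:R : C); set M := j.+1.
have HL : (\sum_(p < M) a p * FF p x) ^+ 2 =
   \sum_(p < M) \sum_(q < M) \sum_(k < M) a p * a q * Bc p q k * FF (p + q - k) x.
  rewrite expr2 mulr_suml; apply: eq_bigr => p _.
  rewrite mulr_sumr; apply: eq_bigr => q _.
  have -> : a p * FF p x * (a q * FF q x) = a p * a q * (FF p x * FF q x) by ring.
  rewrite FF_mul mulr_sumr.
  rewrite (@widen_sum _ (fun k => a p * a q * ((k`! * 'C(p, k) * 'C(q, k))%:R * FF (p + q - k) x)) p.+1 M).
  - by apply: eq_bigr => k _; rewrite /Bc mulrA.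
  - exact: ltn_ord.
  - by move=> i hi _; rewrite (bin_small hi) !(muln0, mul0n, mulr0n, mulr0, mul0r) .
rewrite HL.
have HR : \sum_(p < M) a p * FF p x =
   \sum_(n < M) \sum_(k < M) \sum_(p < M) \sum_(s < M) T n k p s * FF n x.
  apply: eq_bigr => n _; rewrite (E n) mulr_suml.
  have hn : (n.+1 <= M)%N by exact: ltn_ord.
  rewrite (@widen_sum _ (fun k => (\sum_(p < n.+1) \sum_(s < n.+1) T n k p s) * FF n x) n.+1 M hn).
    apply: eq_bigr => k _; rewrite mulr_suml.
    rewrite (@widen_sum _ (fun p => (\sum_(s < n.+1) T n k p s) * FF n x) n.+1 M hn).
      apply: eq_bigr => p _; rewrite mulr_suml.
      rewrite (@widen_sum _ (fun s => T n k p s * FF n x) n.+1 M hn) //.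
      move=> s hs _; rewrite Tz ?mul0r //; apply/negP => /and3P[h1 h2 /eqP h3]; lia.
    move=> p hp _; rewrite big1 ?mul0r // => s _.
    rewrite Tz //; apply/negP => /and3P[h1 h2 /eqP h3]; lia.
  move=> k hk _; rewrite big1 ?mul0r // => p _; rewrite big1 // => s _.
  rewrite Tz //; apply/negP => /and3P[h1 h2 /eqP h3]; lia.
rewrite HR.
rewrite [RHS]exchange_big /=.
have hj : (j < M)%N by [].
under [RHS]eq_bigr => k _.
  rewrite exchange_big /=.
  under eq_bigr => p _.
    rewrite exchange_big /=.
    under eq_bigr => s _ do rewrite (inner_n k p s hj).
    over.
  over.
rewrite [RHS]exchange_big /=.
apply: eq_bigr => p _; rewrite [RHS]exchange_big //.
Qed.
End Lam.

Section End.
Variable C : numFieldType.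
Variable a : nat -> C.

Definition lam (j : nat) : C := \sum_(p < j.+1) a p * FF p (j%:R : C).

Definition isZ (z : C) := exists m : int, z = m%:~R.

Lemma isZ_sum n (f : nat -> C) : (forall i, (i < n)%N -> isZ (f i)) -> isZ (\sum_(i < n) f i).
Proof.
elim: n => [|n IH] h; first by exists 0; rewrite big_ord0.
rewrite big_ord_recr /=.
have [m1 ->] := IH (fun i hi => h i (ltnW hi)).
have [m2 ->] := h n (ltnSn n).
by exists (m1 + m2); rewrite rmorphD.
Qed.

Lemma idem01 (z : C) : z ^+ 2 = z -> z = 0 \/ z = 1.
Proof.
move=> h; have : z * (z - 1) = 0 by rewrite mulrBr mulr1 -expr2 h subrr.
move/eqP; rewrite mulf_eq0 => /orP[/eqP -> | ]; first by left.
by rewrite subr_eq0 => /eqP ->; right.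
Qed.

Hypothesis Hid : forall j, lam j ^+ 2 = lam j.

Lemma lam_split p : lam p = \sum_(i < p) (a i * i`!%:R) * 'C(p, i)%:R + a p * p`!%:R.
Proof.
rewrite /lam big_ord_recr /=; congr (_ + _).
  apply: eq_bigr => i _; rewrite FF_nat natrM; ring.
by rewrite FF_nat binn mul1n.
Qed.

Lemma c_int p : isZ (a p * p`!%:R).
Proof.
elim/ltn_ind: p => p IH.
have -> : a p * p`!%:R = lam p - \sum_(i < p) (a i * i`!%:R) * 'C(p, i)%:R.
  by rewrite lam_split addrC addKr.
have [m1 h1] : isZ (lam p).
  by case: (idem01 (Hid p)) => ->; [exists 0 | exists 1].
have [m2 h2] : isZ (\sum_(i < p) (a i * i`!%:R) * 'C(p, i)%:R).
  apply: (@isZ_sum p (fun i => (a i * i`!%:R) * 'C(p, i)%:R)) => i hi; have [m ->] := IH i hi.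
  by exists (m * ('C(p, i))%:Z); rewrite rmorphM /= pmulrn.
by exists (m1 - m2); rewrite h1 h2 rmorphB.
Qed.

Hypothesis Hsmall : exists N, forall n, (N <= n)%N -> forall z : int, a n * n`!%:R = z%:~R -> z = 0.

Lemma a_ev0 : exists N, forall n, (N <= n)%N -> a n = 0.
Proof.
have [N HN] := Hsmall; exists N => n hn.
have [m hm] := c_int n.
have := HN n hn m hm; move=> m0; move: hm; rewrite m0 /= => /eqP.
rewrite mulf_eq0 pnatr_eq0 => /orP[/eqP //|].
by move=> /eqP h; have := fact_gt0 n; rewrite h.
Qed.

Lemma lam_const : exists c, forall j, lam j = c.
Proof.
have [N HN] := a_ev0.
pose L : {poly C} := \sum_(p < N) a p *: \prod_(i < p) ('X - (i%:R : C)%:P).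
have HL : forall j, L.[j%:R] = lam j.
  move=> j; rewrite /L horner_sum /lam.
  have e1 : forall p : 'I_N, (a p *: \prod_(i < p) ('X - (i%:R : C)%:P)).[j%:R] = a p * FF p (j%:R : C).
    move=> p; rewrite hornerZ horner_prod /FF; congr (_ * _).
    by apply: eq_bigr => i _; rewrite hornerXsubC.
  under eq_bigr do rewrite e1.
  rewrite (@widen_sum _ (fun p => a p * FF p (j%:R : C)) N (N + j.+1)); last 2 first.
    - by rewrite leq_addr.
    - by move=> i hi _; rewrite HN // mul0r.
  rewrite [RHS](@widen_sum _ (fun p => a p * FF p (j%:R : C)) j.+1 (N + j.+1)) //.
    by rewrite leq_addl.
  by move=> i hi _; rewrite FF_big // mulr0.
have LL : L * L = L.
  apply/eqP; rewrite -subr_eq0; apply/eqP.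
  set P := L * L - L.
  apply/eqP/negPn/negP => hP.
  have H := @max_poly_roots C P [seq (j%:R : C) | j <- iota 0 (size P)] hP.
  rewrite size_map size_iota ltnn in H; suff : false by []; apply: H.
    apply/allP => r /mapP [j _ ->]; rewrite /root /P hornerD hornerN hornerM HL.
    by rewrite -expr2 Hid subrr.
  rewrite map_inj_uniq ?iota_uniq // => u v /eqP; rewrite eqr_nat => /eqP //.
have [c Lc] : exists c, L = c%:P.
  case: (eqVneq L 0) => hL0; first by exists 0; rewrite hL0.
  exists L`_0; apply: size1_polyC.
  have := congr1 (fun q : {poly C} => size q) LL; rewrite /= size_mul //.
  case: (size L) => // n; rewrite addSn /=; lia.
by exists c => j; rewrite -HL Lc hornerC.
Qed.

Lemma final_a : (forall p, (0 < p)%N -> a p = 0) /\ (a 0 = 0 \/ a 0 = 1).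
Proof.
have [c Hc] := lam_const.
have l0 : lam 0 = a 0 by rewrite /lam big_ord1 FF0 mulr1.
split; last by apply: idem01; rewrite -l0 Hid.
elim/ltn_ind => p IH hp.
case: p IH hp => // p IH _.
have := Hc p.+1; rewrite -(Hc 0) l0 lam_split.
rewrite big_ord_recl /= bin0 fact0 !mulr1 big1.
  rewrite addr0 => /eqP; rewrite -subr_eq0 addrC addKr mulf_eq0 pnatr_eq0.
  by case/orP => /eqP // h; have := fact_gt0 p.+1; rewrite h.
move=> i _; rewrite IH ?mul0r //; rewrite /bump /=; have := ltn_ord i; lia.
Qed.

End End.

Unset Implicit Arguments. Set Strict Implicit.
Section Main.
Variable R : realType.
Implicit Types (u : nat -> R[i]) (z : R[i]).

Lemma normc_ge0 z : 0 <= Normc.normc z.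
Proof. by case: z => x y; rewrite /= sqrtr_ge0. Qed.

Lemma normc_conj z : Normc.normc (conjc z) = Normc.normc z.
Proof. by case: z => x y; rewrite /= sqrrN. Qed.

Lemma normc_nat n : Normc.normc (n%:R : R[i]) = n%:R.
Proof. by rewrite normcMn Normc.normc1. Qed.

Lemma normcX z n : Normc.normc (z ^+ n) = Normc.normc z ^+ n.
Proof. by elim: n => [|n IH]; rewrite ?expr0 ?Normc.normc1 // !exprS Normc.normcM IH. Qed.

Lemma normcB z w : Normc.normc (z - w) <= Normc.normc z + Normc.normc w.
Proof. by rewrite -(normcN w) le_normcD. Qed.

Lemma series_fin u l N : series_to u l -> (forall k, (N <= k)%N -> u k = 0) ->
  l = \sum_(k < N) u k.
Proof.
move=> hs hz.
have wid : forall m, \sum_(k < N + m) u k = \sum_(k < N) u k.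
  elim=> [|m IH]; first by rewrite addn0.
  by rewrite addnS big_ord_recr /= IH hz ?addr0 // leq_addr.
apply/eqP; rewrite eq_sym -subr_eq0; apply/eqP.
set d := _ - _.
case: (eqVneq d 0) => // hd.
have hpos : 0 < Normc.normc d.
  rewrite lt_neqAle normc_ge0 andbT; apply/negP => /eqP h.
  by move/eqP: hd; apply; apply: Normc.eq0_normc; rewrite -h.
have [N0 HN0] := hs _ hpos.
have := HN0 (N + N0)%N (leq_addl _ _); rewrite wid -/d.
by rewrite ltxx.
Qed.

Lemma series_small u l : series_to u l -> exists N, forall n, (N <= n)%N -> Normc.normc (u n) < 1.
Proof.
move=> hs; have [N HN] := hs (1/2) ltac:(lra).
exists N => n hn.
have -> : u n = (\sum_(k < n.+1) u k - l) - (\sum_(k < n) u k - l).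
  by rewrite big_ord_recr /=; ring.
apply: le_lt_trans (normcB _ _) _.
have h1 := HN n.+1 (leqW hn); have h2 := HN n hn.
have -> : (1 : R) = 1/2 + 1/2 by field.
exact: ltrD.
Qed.

Lemma normc_int (m : int) : m != 0 -> 1 <= Normc.normc (m%:~R : R[i]).
Proof.
move=> hm.
have -> : (m%:~R : R[i]) = ((m%:~R : R)%:C)%C by rewrite -(rmorph_int (real_complex R)).
rewrite /Normc.normc /= expr0n /= addr0 sqrtr_sqr -intr_norm ler1z -gtz0_ge1 normr_gt0 //.
Qed.

Variable theta : R.
Hypothesis htheta : 0 < theta.
Let t := itheta theta.

Lemma gamma2 : gamma theta ^+ 2 = t.
Proof.
rewrite /gamma /t /itheta.
have hs : ((Num.sqrt (2 * theta))%:C)%C ^+ 2 = 2 * (theta%:C)%C :> R[i].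
  rewrite -rmorphXn /= sqr_sqrtr; last exact: mulr_ge0 (ler0n _ 2) (ltW htheta).
  by rewrite rmorphM /= rmorph_nat.
have hi : ('i%C : R[i]) ^+ 2 = -1 by rewrite sqr_i.
rewrite !exprMn hs exprVn.
have -> : (1 + 'i%C) ^+ 2 = 2 * 'i%C :> R[i] by rewrite sqrrD hi expr1n; ring.
rewrite mulrACA -expr2 mulrAC divff ?mul1r //.
by rewrite expf_neq0 // pnatr_eq0.
Qed.

Lemma normc_t : Normc.normc t = theta.
Proof.
rewrite /t /itheta Normc.normcM.
rewrite /Normc.normc /= !expr0n /= addr0 add0r expr1n sqrtr1 mulr1 sqrtr_sqr.
by rewrite gtr0_norm.
Qed.

Lemma t_neq0 : t != 0.
Proof.
apply/eqP => h; have := normc_t; rewrite h Normc.normc0 => h0.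
by move: htheta; rewrite -h0 ltxx.
Qed.

Variable a : nat -> R[i].
Let S := diagS theta a.

Lemma S_diag p : S p p = a p * (t ^+ p)^-1.
Proof. by rewrite /S /diagS eqxx exprM gamma2. Qed.

Lemma summand n k p s : (p <= n)%N -> (s <= n)%N ->
  S p (n - s + k)%N * S (n - p + k)%N s * (k`! * 'C(n - s + k, k) * 'C(n - p + k, k))%:R * t ^+ k
  = if (p + s == n + k)%N then a p * (t ^+ p)^-1 * (a s * (t ^+ s)^-1) * Bc _ p s k * t ^+ k else 0.
Proof.
move=> hp hs.
case: eqP => h.
  have -> : (n - s + k = p)%N by lia.
  have -> : (n - p + k = s)%N by lia.
  by rewrite !S_diag.
rewrite /S /diagS.
have -> : (p == n - s + k)%N = false by apply/eqP; lia.
by rewrite !mul0r.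
Qed.

Lemma E_n : is_mul theta S S S -> forall n,
  a n = \sum_(k < n.+1) \sum_(p < n.+1) \sum_(s < n.+1) T a n k p s.
Proof.
move=> hm n.
have hl := @series_fin _ _ n.+1 (hm n n).
have eqmt : forall k, mul_term theta S S n n k =
   \sum_(p < n.+1) \sum_(s < n.+1)
     (if (p + s == n + k)%N then a p * (t ^+ p)^-1 * (a s * (t ^+ s)^-1) * Bc _ p s k * t ^+ k else 0).
  move=> k; rewrite /mul_term; apply: eq_bigr => p _; apply: eq_bigr => s _.
  by rewrite -summand // -ltnS ltn_ord.
have {}hl : S n n = \sum_(k < n.+1) mul_term theta S S n n k.
  apply: hl => k hk; rewrite eqmt; apply: big1 => p _; apply: big1 => s _.
  case: eqP => // h; have := ltn_ord p; have := ltn_ord s; lia.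
rewrite S_diag in hl.
have ha : a n = t ^+ n * \sum_(k < n.+1) mul_term theta S S n n k.
  rewrite -hl mulrC -mulrA mulVf ?mulr1 //; exact: expf_neq0 t_neq0.
rewrite ha mulr_sumr; apply: eq_bigr => k _.
rewrite eqmt mulr_sumr; apply: eq_bigr => p _.
rewrite mulr_sumr; apply: eq_bigr => s _.
rewrite /T; case: eqP => h; last by rewrite mulr0.
have e : t ^+ n * t ^+ k = t ^+ p * t ^+ s by rewrite -!exprD h.
have hp := expf_neq0 p t_neq0; have hs := expf_neq0 s t_neq0.
have e2 : t ^+ n * t ^+ k * (t ^+ p)^-1 * (t ^+ s)^-1 = 1.
  by rewrite e -mulrA -invfM divff // mulf_neq0.
transitivity (a p * a s * Bc _ p s k * (t ^+ n * t ^+ k * (t ^+ p)^-1 * (t ^+ s)^-1)).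
  by ring.
by rewrite e2 mulr1.
Qed.

Lemma normc_S n : Normc.normc (S n n) = Normc.normc (a n) * (theta ^+ n)^-1.
Proof. by rewrite S_diag Normc.normcM Normc.normcV normcX normc_t. Qed.

Lemma small : is_star theta S S ->
  exists N, forall n, (N <= n)%N -> forall z : int, a n * n`!%:R = z%:~R -> z = 0.
Proof.
move=> hst; have [N HN] := @series_small _ _ (hst 0%N 0%N).
exists N => n hn z hz.
have := HN n hn; rewrite /star_term !add0n binn !muln1.
rewrite !Normc.normcM normc_conj normc_S normc_nat normcX normc_t.
have hth : theta ^+ n != 0 by rewrite expf_neq0 // gt_eqF.
have -> : Normc.normc (a n) * (theta ^+ n)^-1 * n`!%:R * theta ^+ n =
          Normc.normc (a n * n`!%:R).
  rewrite Normc.normcM normc_nat.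
  transitivity (Normc.normc (a n) * n`!%:R * ((theta ^+ n)^-1 * theta ^+ n)); first by ring.
  by rewrite mulVf ?mulr1.
rewrite hz => hlt; apply/eqP; apply/negPn/negP => hz0.
by have := normc_int z hz0; rewrite leNgt hlt.
Qed.

End Main.

From Stdlib Require Import FunctionalExtensionality.

Theorem proposition3p2 (R : realType) (theta : R) (a : nat -> R[i]) :
  0 < theta ->
  in_Ainf (diagS theta a) ->
  is_mul theta (diagS theta a) (diagS theta a) (diagS theta a) ->
  is_star theta (diagS theta a) (diagS theta a) ->
  diagS theta a = fs0 R \/ diagS theta a = fs1 R.
Proof.
move=> ht _ hm hs.
have E := @E_n R theta ht a hm.
have Hid : forall j, lam a j ^+ 2 = lam a j := lambda_idem E.
have [hpos h0] := final_a Hid (@small R theta ht a hs).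
case: h0 => h0; [left | right]; apply: functional_extensionality => p;
  apply: functional_extensionality => q; rewrite /diagS /fs0 /fs1.
- case: eqP => // _; case: p => [|p]; first by rewrite h0 mul0r.
  by rewrite hpos // mul0r.
- case: eqP => [<-|hpq].
  + case: p => [|p]; first by rewrite h0 expr0 invr1 mulr1.
    by rewrite hpos // mul0r.
  + by case: p hpq => [|p] hpq //; case: q hpq.
Qed.
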